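(* Under Friends Appreciation, in every partition $\pi$ that maximizes the egalitarian welfare, every agent $i$ with $|F_i|=f_{\min}$ satisfies $F_i\subseteq \pi(i)$, i.e., is in the same coalition as all of her friends.
   Context: A friends-and-enemies instance consists of a set of agents $\mathcal{N}=\{1,\dots,n\}$ and, for each agent $i$, a set of friends $F_i\subseteq \mathcal{N}\setminus\{i\}$; the enemies of $i$ are $E_i=\mathcal{N}\setminus(F_i\cup\{i\})$. An outcome is a partition $\pi$ of $\mathcal{N}$; $\pi(i)$ is the coalition containing $i$. Under Friends Appreciation, $u_i(C)=|C\cap F_i|-\frac{1}{n}|C\cap E_i|$ for $C\ni i$, $u_i(\pi)=u_i(\pi(i))$, and $\mathsf{ESW}(\pi)=\min_i u_i(\pi)$. Here $f_{\min}=\min_{i\in\mathcal{N}}|F_i|$. *)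

(* Defs.v *)
From HB Require Import structures.
From mathcomp Require Import all_boot all_order all_algebra.
Set Implicit Arguments. Unset Strict Implicit. Unset Printing Implicit Defensive.
Import Order.TTheory GRing.Theory Num.Theory.
Local Open Scope ring_scope.

Section FriendsEnemies.
Variable T : finType.
Variable F : T -> {set T}.

Definition enemies (i : T) : {set T} := ~: (F i :|: [set i]).

Definition fa_util (i : T) (C : {set T}) : rat :=
  (#|C :&: F i|)%:R - (#|C :&: enemies i|)%:R / (#|T|)%:R.

Definition fa_util_part (P : {set {set T}}) (i : T) : rat :=
  fa_util i (pblock P i).

(* ESW(pi) = min_i u_i(pi).  The fold starts from n = #|T|, which is a strict
   upper bound on every utility (u_i <= |F_i| <= n - 1), so for T nonempty this
   is exactly the minimum over agents. *)
Definition esw (P : {set {set T}}) : rat :=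
  \big[Num.min/(#|T|)%:R]_(i : T) fa_util_part P i.
End FriendsEnemies.

(* Main.v *)
Require Import Defs.
From mathcomp Require Import all_boot all_order all_algebra.
From mathcomp Require Import lra.
Import Order.TTheory GRing.Theory Num.Theory.
Local Open Scope ring_scope.

Theorem corollary1 (T : finType) (F : T -> {set T})
    (hF : forall i : T, i \notin F i)
    (P : {set {set T}}) (hP : partition P [set: T])
    (hmax : forall Q : {set {set T}}, partition Q [set: T] -> esw F Q <= esw F P)
    (i : T) (hi : forall j : T, (#|F i| <= #|F j|)%N) :
  F i \subset pblock P i.
Proof.
apply/negPn/negP => hsub.
set n := #|T|.
have n0 : (0 < n)%N by apply/card_gt0P; exists i.
have n0r : 0 < n%:R :> rat by rewrite ltr0n.
have hlt : (#|pblock P i :&: F i| < #|F i|)%N.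
  apply: proper_card; rewrite properE subsetIr /=.
  by apply: contra hsub => h; apply: subset_trans h (subsetIl _ _).
have hP1 : esw F P <= (#|F i|)%:R - 1.
  apply: le_trans (bigmin_le _ i _) _.
  rewrite /fa_util_part /fa_util.
  have h1 : (#|pblock P i :&: F i|)%:R <= (#|F i|)%:R - 1 :> rat.
    have : ((#|pblock P i :&: F i|).+1)%:R <= (#|F i|)%:R :> rat by rewrite ler_nat.
    rewrite -addn1 natrD; lra.
  apply: le_trans h1; rewrite lerBlDr lerDl.
  by apply: divr_ge0; rewrite ler0n.
set Q := [set [set: T]].
have hQ : partition Q [set: T].
  rewrite /partition cover1 eqxx trivIset1 /= in_set1.
  apply/negP => /eqP h; have : i \in [set: T] by rewrite inE.
  by rewrite -h inE.
have hpb : forall k, pblock Q k = [set: T].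
  move=> k; have : pblock Q k \in Q by apply: pblock_mem; rewrite cover1 inE.
  by rewrite in_set1 => /eqP.
have hQ1 : (#|F i|)%:R - 1 < esw F Q.
  apply: lt_bigmin => [|k _].
    suff hh : (#|F i| < n)%N.
      have : (#|F i|)%:R < n%:R :> rat by rewrite ltr_nat.
      move=> hh'; lra.
    have : (#|F i| < n)%N.
      rewrite /n -(cardsC (F i)); rewrite -addn1 leq_add2l.
      by apply/card_gt0P; exists i; rewrite inE hF.
    by [].
  rewrite /fa_util_part /fa_util hpb !setTI.
  have hk : (#|enemies F k| < n)%N.
    rewrite /n -cardsT; apply: proper_card; rewrite properE subsetT /=.
    apply/subsetPn; exists k; first by rewrite inE.
    by rewrite /enemies !inE eqxx orbT.
  have h2 : (#|enemies F k|)%:R / n%:R < 1 :> rat.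
    by rewrite ltr_pdivrMr // mul1r ltr_nat.
  have h3 : (#|F i|)%:R <= (#|F k|)%:R :> rat by rewrite ler_nat.
  move: h2 h3; set a := (_ / _); set b := (#|F i|)%:R; set c := (#|F k|)%:R.
  move=> h2 h3; lra.
have := hmax Q hQ.
have := lt_le_trans hQ1 (le_trans (hmax Q hQ) hP1).
by rewrite ltxx.
Qed.
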